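(* For every positive integer $k$, the windmill of $k$ wheels $W_4^{(k)}$ is difference distance magic orientable.
   Context: For $k\in\mathbb{Z}^+$, $W_4^{(k)}$ is the simple undirected graph on $1+4k$ vertices with vertex set $\{v\}\cup\{v_{ij}:1\le i\le k,\ 1\le j\le 4\}$ and edge set $\bigcup_{i=1}^k\big(\{v_{i1}v_{i2},v_{i1}v_{i3},v_{i3}v_{i4},v_{i2}v_{i4}\}\cup\{vv_{i1},vv_{i2},vv_{i3},vv_{i4}\}\big)$. An orientation of a graph assigns a direction to each edge, giving an oriented graph. In an oriented graph, $N^+(x)=\{y:(y,x)\text{ is an arc}\}$, $N^-(x)=\{y:(x,y)\text{ is an arc}\}$, and for a labeling $f$, $wt_f(x)=\sum_{y\in N^+(x)}f(y)-\sum_{y\in N^-(x)}f(y)$. A DDM labeling of an oriented graph on $n$ vertices is a bijection $f:V\to\{1,\dots,n\}$ with $wt_f(x)=0$ for all $x$. A graph is difference distance magic orientable (DDMO) if it has an orientation admitting a DDM labeling. *)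

(* Defs.v *)
From mathcomp Require Import all_boot all_order all_algebra.
Set Implicit Arguments. Unset Strict Implicit. Unset Printing Implicit Defensive.
Import Order.TTheory GRing.Theory Num.Theory.

Definition is_orientation (V : finType) (adj : rel V) (arc : rel V) : Prop :=
  (forall x y, arc x y -> adj x y) /\
  (forall x y, adj x y -> arc x y (+) arc y x).

(* wt_f(x) = sum_{y in N^+(x)} f y - sum_{y in N^-(x)} f y,
   N^+(x) = {y : (y,x) arc}, N^-(x) = {y : (x,y) arc}. *)
Definition wt (V : finType) (arc : rel V) (f : V -> nat) (x : V) : int :=
  (\sum_(y | arc y x) (f y)%:Z - \sum_(y | arc x y) (f y)%:Z)%R.

Definition is_DDM_labeling (V : finType) (arc : rel V) (f : V -> nat) : Prop :=
  injective f /\ (forall x, 1 <= f x <= #|V|)%N /\ (forall x, wt arc f x = 0%R).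

Definition DDMO (V : finType) (adj : rel V) : Prop :=
  exists arc : rel V, is_orientation adj arc /\
    exists f : V -> nat, is_DDM_labeling arc f.

(* The windmill W_4^(k): vertex None is the center v; Some (i, j) is
   v_{i,j+1} (i : 'I_k, j : 'I_4, 0-based). *)
Definition W4_vertex (k : nat) : finType := option ('I_k * 'I_4)%type.

(* Cycle edges within block i: v_{i1}v_{i2}, v_{i1}v_{i3}, v_{i3}v_{i4},
   v_{i2}v_{i4}, i.e. 0-based pairs {0,1},{0,2},{2,3},{1,3}. *)
Definition C4_adj (a b : nat) : bool :=
  [|| (a == 0) && (b == 1), (a == 0) && (b == 2),
      (a == 2) && (b == 3) | (a == 1) && (b == 3)]%N.

Definition W4_adj (k : nat) : rel (W4_vertex k) :=
  fun x y =>
    match x, y with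
    | None, None => false
    | None, Some _ => true
    | Some _, None => true
    | Some (i, a), Some (i', b) =>
        (i == i') && (C4_adj a b || C4_adj b a)
    end.

(* Main.v *)
Require Import Defs.
From mathcomp Require Import all_boot all_order all_algebra.
From mathcomp Require Import zify.
Import GRing.Theory.

Lemma sum_option (T : finType) (F : option T -> int) :
  (\sum_(y : option T) F y = F None + \sum_(x : T) F (Some x))%R.
Proof.
rewrite (bigD1 None) //=; congr (_ + _)%R.
rewrite (@reindex_omap _ _ _ _ _ Some (fun x => x)); last by case.
by apply: eq_bigl => x; rewrite eqxx.
Qed.

Lemma sum4 (G : 'I_4 -> int) :
  (\sum_(j < 4) G j = G (@Ordinal 4 0 isT) + G (@Ordinal 4 1 isT)
     + G (@Ordinal 4 2 isT) + G (@Ordinal 4 3 isT))%R.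
Proof.
rewrite !big_ord_recr big_ord0 /= add0r.
by congr (_ + _ + _ + _)%R; congr G; apply: val_inj.
Qed.

Definition inner (a b : nat) : bool :=
  ((a == 0) || (a == 3)) && ((b == 1) || (b == 2)).

Definition warc (k : nat) : rel (W4_vertex k) :=
  fun x y =>
    match x, y with
    | None, None => false
    | None, Some (_, j) => (val j == 0) || (val j == 3)
    | Some (_, j), None => (val j == 1) || (val j == 2)
    | Some (i, a), Some (i', b) => (i == i') && inner a b
    end.

Definition lab (k : nat) (x : W4_vertex k) : nat :=
  match x with
  | None => 4 * k + 1
  | Some (i, j) =>
      match val j with
      | 0 => 2 * i + 1
      | 1 => 2 * i + 2
      | 2 => 4 * k - 1 - 2 * i
      | _ => 4 * k - 2 * i
      end
  end.

Lemma sum_split k (P : W4_vertex k -> bool) (F : W4_vertex k -> int) :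
  (\sum_(y | P y) F y = (if P None then F None else 0)
     + \sum_(i < k) \sum_(j < 4) (if P (Some (i, j)) then F (Some (i, j)) else 0))%R.
Proof.
rewrite big_mkcond sum_option; congr (_ + _)%R.
by rewrite pair_big /=; apply: eq_bigr => -[].
Qed.

Lemma sum_blk k (i0 : 'I_k) (G : 'I_k -> int) :
  (\sum_(i < k) (if i == i0 then G i else 0) = G i0)%R.
Proof. by rewrite -big_mkcond big_pred1_eq. Qed.

Lemma blk k (i0 : 'I_k) (P : 'I_4 -> bool) :
  (\sum_(i < k) \sum_(j < 4) (if (i == i0) && P j then (lab k (Some (i, j)))%:Z else 0)
   = \sum_(j < 4) (if P j then (lab k (Some (i0, j)))%:Z else 0))%R.
Proof.
rewrite -[RHS](@big_pred1_eq _ 0%R +%R _ i0 (fun i =>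
  \sum_(j < 4) (if P j then (lab k (Some (i, j)))%:Z else 0))%R) big_mkcond.
apply: eq_bigr => i _; case: eqP => [->|_].
  by [].
by apply: big1.
Qed.

Lemma blk2 k (i0 : 'I_k) (P : 'I_4 -> bool) :
  (\sum_(i < k) \sum_(j < 4) (if (i0 == i) && P j then (lab k (Some (i, j)))%:Z else 0)
   = \sum_(j < 4) (if P j then (lab k (Some (i0, j)))%:Z else 0))%R.
Proof.
rewrite -blk; apply: eq_bigr => i _; apply: eq_bigr => j _; by rewrite eq_sym.
Qed.

Theorem theorem4 (k : nat) : (0 < k)%N -> DDMO (@W4_adj k).
Proof.
move=> k0.
exists (@warc k); split.
  split.
    move=> [[i a]|] [[i' b]|] //=.
    case/andP=> -> /=; rewrite /inner /C4_adj.
    by case: a b => [[|[|[|[|?]]]] ?] [[|[|[|[|?]]]] ?].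
  move=> [[i a]|] [[i' b]|] //=.
  - rewrite (eq_sym i'); case: (i == i') => //=; rewrite /inner /C4_adj.
    by case: a b => [[|[|[|[|?]]]] ?] [[|[|[|[|?]]]] ?].
  - by case: a => [[|[|[|[|?]]]] ?].
  - by case: b => [[|[|[|[|?]]]] ?].
exists (@lab k); split; last split.
- move=> [[i a]|] [[i' b]|] /=.
  + have Hi := ltn_ord i; have Hi' := ltn_ord i'.
    case: a b => [[|[|[|[|?]]]] Ha] [[|[|[|[|?]]]] Hb] //= E;
    first [ (exfalso; lia) |
            (have Eii : i = i' by apply: val_inj => /=; lia);
            by rewrite Eii; congr (Some (_, _)); apply: val_inj ].
  + have Hi := ltn_ord i.
    case: a => [[|[|[|[|?]]]] Ha] //= E; exfalso; lia.
  + have Hi := ltn_ord i'.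
    case: b => [[|[|[|[|?]]]] Hb] //= E; exfalso; lia.
  + by [].
- have -> : #|W4_vertex k| = (k * 4).+1.
    by rewrite /W4_vertex card_option card_prod !card_ord.
  move=> [[i a]|] /=; last by lia.
  have Hi := ltn_ord i.
  by case: a => [[|[|[|[|?]]]] Ha] /=; lia.
- move=> x; rewrite /wt !sum_split.
  case: x => [[i0 j0]|].
  + rewrite /= blk blk2 !sum4 /=.
    have Hi := ltn_ord i0.
    case: j0 => [[|[|[|[|?]]]] Hj] /=; rewrite /inner /=; lia.
  + rewrite /= !add0r; apply/eqP; rewrite subr_eq0; apply/eqP.
    apply: eq_bigr => i _; rewrite !sum4 /=.
    have Hi := ltn_ord i; lia.
Qed.
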